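(* If there exists an ${}^\alpha\mathrm{H}_t(m,n;s,k)$, then for every positive divisor $\lambda$ of $t$ there exists a ${}^{\lambda\alpha}\mathrm{H}_{t/\lambda}(m,n;s,k)$. More precisely, if $A$ is an ${}^\alpha\mathrm{H}_t(m,n;s,k)$ over $\mathbb{Z}_v$ with $v=\frac{2nk}{\alpha}+t$, then the array obtained from $A$ by reducing every entry modulo $\frac{v}{\lambda}$ (i.e. applying the natural projection $\mathbb{Z}_v\to\mathbb{Z}_{v/\lambda}$) is a ${}^{\lambda\alpha}\mathrm{H}_{t/\lambda}(m,n;s,k)$ over $\mathbb{Z}_{v/\lambda}$.
   Context: For positive integers $m,n,s,k,\lambda,t$ with $t$ dividing $\frac{2nk}{\lambda}$, let $v=\frac{2nk}{\lambda}+t$ and $J$ the subgroup of $\mathbb{Z}_v$ of order $t$. A $\lambda$-fold Heffter array over $\mathbb{Z}_v$ relative to $J$, denoted ${}^\lambda\mathrm{H}_t(m,n;s,k)$, is an $m\times n$ partially filled array with entries in $\mathbb{Z}_v$ such that: (a) each row has exactly $s$ and each column exactly $k$ filled cells; (b) the multiset $\{\pm x: x$ an entry of a filled cell$\}$ (counted over all filled cells) contains each element of $\mathbb{Z}_v\setminus J$ exactly $\lambda$ times and no element of $J$; (c) every row and every column sums to $0$ in $\mathbb{Z}_v$. (When $\lambda=1$ this is a relative Heffter array $\mathrm{H}_t(m,n;s,k)$.) *)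

(* Defs.v *)
From mathcomp Require Import all_boot.
Set Implicit Arguments. Unset Strict Implicit. Unset Printing Implicit Defensive.

(* A partially filled m x n array with entries in Z_v: an empty cell is None,
   a filled cell is Some x, where x : nat is the canonical representative
   (0 <= x < v) of an element of Z_v. *)
Definition parr (m n : nat) := 'I_m -> 'I_n -> option nat.

Definition entry m n (A : parr m n) i j : nat := odflt 0 (A i j).

(* multiplicity of the residue y (0 <= y < v) in the multiset
   { x, -x : x entry of a filled cell } taken in Z_v *)
Definition pm_count (v : nat) m n (A : parr m n) (y : nat) : nat :=
  \sum_(i < m) \sum_(j < n)
    match A i j with
    | Some x => ((x %% v) == y) + (((v - x %% v) %% v) == y)
    | None => 0
    end.

(* J = the subgroup of Z_v of order t, i.e. the multiples of v/t (t | v). *)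
Definition inJ (v t y : nat) : bool := (v %/ t) %| y.

Definition heffter_over (lam v t m n s k : nat) (A : parr m n) : Prop :=
  (forall i j x, A i j = Some x -> x < v) /\
  [/\ (forall i : 'I_m, #|[pred j : 'I_n | A i j != None]| = s),
      (forall j : 'I_n, #|[pred i : 'I_m | A i j != None]| = k),
      (forall y, y < v -> pm_count v A y = if inJ v t y then 0 else lam),
      (forall i : 'I_m, (\sum_(j < n) entry A i j) %% v = 0)
    & (forall j : 'I_n, (\sum_(i < m) entry A i j) %% v = 0)].

Definition hv (lam t n k : nat) : nat := (2 * n * k) %/ lam + t.

Definition lheffter (lam t m n s k : nat) (A : parr m n) : Prop :=
  [/\ 0 < m, 0 < n, 0 < s, 0 < k & 0 < lam /\ 0 < t] /\
  [/\ lam %| 2 * n * k, t %| (2 * n * k) %/ lam &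
      @heffter_over lam (hv lam t n k) t m n s k A].

Definition reduce (w : nat) m n (A : parr m n) : parr m n :=
  fun i j => omap (fun x => x %% w) (A i j).

(* Main.v *)
Require Import Defs.
From mathcomp Require Import all_boot.

Lemma cnt {w lam z y : nat} : 0 < w -> z < w * lam -> y < w ->
  ((z %% w == y) : nat) = \sum_(c < lam) ((z == y + c * w) : nat).
Proof.
move=> w0 zlt ylt.
have hq : z %/ w < lam by rewrite ltn_divLR // mulnC.
rewrite (bigD1 (Ordinal hq)) //= big1 ?addn0.
  case: eqP => [<-|ne]; first by rewrite {1}(divn_eq z w) addnC eqxx.
  case: eqP => // ez; exfalso; apply: ne; by rewrite ez addnC modnMDl modn_small.
move=> c /negP nc; case: eqP => // ez; exfalso; apply: nc; apply/eqP/val_inj => /=.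
by rewrite ez addnC divnMDl // divn_small // addn0.
Qed.

Lemma negmod (v w x : nat) : 0 < w -> w %| v -> x < v ->
  ((v - x) %% v) %% w = (w - x %% w) %% w.
Proof.
move=> w0 wv xv.
rewrite (modn_dvdm _ wv).
apply/eqP; rewrite -(eqn_modDr x) subnK ?(ltnW xv) //.
rewrite -modnDmr subnK ?(ltnW (ltn_pmod x w0)) // modnn.
exact: wv.
Qed.

Lemma pmred (v w lam m n : nat) (A : parr m n) (y : nat) : 0 < w -> v = w * lam ->
  (forall i j x, A i j = Some x -> x < v) -> y < w ->
  pm_count w (reduce w A) y = \sum_(c < lam) pm_count v A (y + c * w).
Proof.
move=> w0 ev hA yw; rewrite /pm_count [RHS]exchange_big; apply: eq_bigr => i _.
rewrite [RHS]exchange_big; apply: eq_bigr => j _.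
rewrite /reduce; case E: (A i j) => [x|] /=; last by rewrite big1.
have xv := hA _ _ _ E.
have wv : w %| v by rewrite ev dvdn_mulr.
have xmv : (v - x) %% v < w * lam by rewrite -ev ltn_pmod // (leq_ltn_trans _ xv).
rewrite (modn_small xv) big_split /= -(cnt (z:=x) w0 _ yw) -?ev // -(cnt w0 xmv yw).
by rewrite modn_mod (negmod _ _ _ w0 wv xv).
Qed.

Lemma mainl (alpha lam a c m n s k : nat) (A : parr m n) :
  0 < lam -> 0 < a -> 0 < c ->
  heffter_over alpha (c * a * lam) (a * lam) s k A ->
  heffter_over (lam * alpha) (c * a) a s k (reduce (c * a) A).
Proof.
move=> l0 a0 c0 [hA [hr hc hpm hrs hcs]].
set w := c * a.
have w0 : 0 < w by rewrite muln_gt0 c0 a0.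
have wv : w %| w * lam by rewrite dvdn_mulr.
have entE : forall i j, entry (reduce w A) i j = entry A i j %% w.
  by move=> i j; rewrite /entry /reduce; case: (A i j) => //=; rewrite mod0n.
have nE : forall i j, (reduce w A i j != None) = (A i j != None).
  by move=> i j; rewrite /reduce; case: (A i j).
split.
  by move=> i j x; rewrite /reduce; case: (A i j) => //= x0 [<-]; rewrite ltn_pmod.
split.
- by move=> i; rewrite -(hr i); apply: eq_card => j; rewrite !inE nE.
- by move=> j; rewrite -(hc j); apply: eq_card => i; rewrite !inE nE.
- move=> y yw.
  rewrite (pmred (w * lam) w lam m n A y w0 (erefl _)) //.
  have Jv : forall c', c' < lam -> inJ (c * a * lam) (a * lam) (y + c' * w) = inJ w a y.
    move=> c' _; rewrite /inJ /w -mulnA mulnK ?muln_gt0 ?a0 // mulnK //.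
    by rewrite dvdn_addl // mulnCA dvdn_mulr.
  rewrite (eq_bigr (fun _ => if inJ w a y then 0 else alpha)); last first.
    move=> c' _; rewrite hpm ?Jv //.
    have : y + c' * w < w + c' * w by rewrite ltn_add2r.
    move/leq_trans; apply; rewrite -mulSn -/w mulnC leq_pmul2l // ltn_ord.
  by rewrite sum_nat_const card_ord; case: (inJ w a y); rewrite ?muln0.
- move=> i; rewrite (eq_bigr (fun j => entry A i j %% w)) => [|j _]; last exact: entE.
  by rewrite modn_summ -(modn_dvdm _ wv) hrs mod0n.
- move=> j; rewrite (eq_bigr (fun i => entry A i j %% w)) => [|i _]; last exact: entE.
  by rewrite modn_summ -(modn_dvdm _ wv) hcs mod0n.
Qed.

Theorem theorem4p4 (alpha t m n s k lam : nat) (A : parr m n) :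
  @lheffter alpha t m n s k A ->
  0 < lam -> lam %| t ->
  @lheffter (lam * alpha) (t %/ lam) m n s k
    (reduce (hv alpha t n k %/ lam) A).
Proof.
move=> [[m0 n0 s0 k0 [al0 t0]] [hal hq H]] l0 /dvdnP [a ta].
set q := 2 * n * k %/ alpha in hq H.
move: hq => /dvdnP [b qb].
have hN : 2 * n * k = b * a * (lam * alpha).
  by rewrite -(divnK hal) -/q qb ta !mulnA.
have a0 : 0 < a by move: t0; rewrite ta muln_gt0 => /andP [].
have hv1 : hv alpha t n k = (b.+1 * a) * lam.
  by rewrite /hv -/q qb ta mulSn addnC !mulnA mulnDl.
have hv2 : hv (lam * alpha) (t %/ lam) n k = b.+1 * a.
  by rewrite /hv hN mulnK ?muln_gt0 ?l0 // ta mulnK // mulSn addnC.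
have ta' : t %/ lam = a by rewrite ta mulnK.
rewrite hv1 mulnK //.
split; first by rewrite muln_gt0 l0 al0 ta' a0.
split.
- by rewrite hN dvdn_mull.
- by rewrite hN mulnK ?muln_gt0 ?l0 // ta' dvdn_mull.
- rewrite hv2 ta'; apply: mainl => //.
  by move: H; rewrite hv1 ta.
Qed.
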